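(* Let $\mu$ be a probability on sentences. The following are equivalent: (1) $\mu$ is Gaifman; (2) $\mu(r\neq s)=\sup_{\{t_1,\dots,t_n\}}\mu(\bigvee_{i=1}^n((r\,t_i)\neq(s\,t_i)))$ for every pair $r,s$ of closed terms of the same function type $\alpha\to\beta$, the supremum ranging over all finite sets of closed terms of type $\alpha$; (3) $\mu(\exists x.\varphi)=\sup_{\{t_1,\dots,t_n\}}\mu(\bigvee_{i=1}^n\varphi\{x/t_i\})$ for every formula $\varphi$ with a single free variable $x$, of type $\alpha$ say, the supremum ranging over all finite sets of closed terms of type $\alpha$; (4) $\mu(\forall x.\varphi)=\inf_{\{t_1,\dots,t_n\}}\mu(\bigwedge_{i=1}^n\varphi\{x/t_i\})$ for every formula $\varphi$ with a single free variable $x$, of type $\alpha$ say, the infimum ranging over all finite sets of closed terms of type $\alpha$.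
   Context: Setting: higher-order logic (Church's simple theory of types, without a description operator), with Henkin semantics. Types are generated from $o$ and $\imath$ by $\alpha\to\beta$; terms are built from variables and constants (including equality constants) by $\lambda$-abstraction and application; connectives and quantifiers are defined from equality, with $\forall x.\varphi$ being $\lambda x.\varphi=\lambda x.\top$ and $\exists x.\varphi$ being $\lambda x.\varphi\neq\lambda x.\bot$. A formula is a term of type $o$, a sentence a closed formula; $\mathcal S$ is the set of sentences; $\varphi\{x/t\}$ denotes substitution of $t$ for free occurrences of $x$. A sentence is valid if true in every interpretation. A probability on sentences is a non-negative $\mu:\mathcal S\to\mathbb R$ with $\mu(\varphi)=1$ for valid $\varphi$ and $\mu(\varphi\vee\psi)=\mu(\varphi)+\mu(\psi)$ whenever $\neg(\varphi\wedge\psi)$ is valid. $\mu$ is Gaifman if for every pair $r,s$ of closed terms of the same function type $\alpha\to\beta$, $\mu(r=s)=\inf_{\{t_1,\dots,t_n\}}\mu(\bigwedge_{i=1}^n((r\,t_i)=(s\,t_i)))$ over all finite sets of closed terms of type $\alpha$. *)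

(* Defs.v *)
From Stdlib Require Import Reals List Bool Arith.
Import ListNotations.
Open Scope R_scope.

Set Implicit Arguments.

Inductive ty : Type := TO | TI | Arr (a b : ty).

Definition ty_eq_dec (a b : ty) : {a = b} + {a <> b}.
Proof. decide equality. Defined.

Definition var_eq_dec (v w : nat * ty) : {v = w} + {v <> w}.
Proof. decide equality; [apply ty_eq_dec | apply Nat.eq_dec]. Defined.

Section Syntax.
Context {C : Type} (cty : C -> ty).

(** Intrinsically typed terms; a variable is a pair (name, type). *)
Inductive tm : ty -> Type :=
| V (n : nat) (a : ty) : tm a
| K (c : C) : tm (cty c)
| Q (a : ty) : tm (Arr a (Arr a TO))                (* equality constant *)
| A {a b : ty} : tm (Arr a b) -> tm a -> tm b
| L (n : nat) (a : ty) {b : ty} : tm b -> tm (Arr a b).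

Fixpoint fvs {b} (t : tm b) : list (nat * ty) :=
  match t with
  | V n a => [(n, a)]
  | K _ => []
  | Q _ => []
  | A f u => fvs f ++ fvs u
  | L n a body => filter (fun v => if var_eq_dec v (n, a) then false else true) (fvs body)
  end.

Definition closed {b} (t : tm b) : Prop := fvs t = [].

(** Substitution t{x/s} of a (closed) term s : tm a for the variable (x,a). *)
Fixpoint subst (x : nat) (a : ty) (s : tm a) {b} (t : tm b) : tm b :=
  match t in tm b return tm b with
  | V y c =>
      match ty_eq_dec a c with
      | left e => if Nat.eqb x y then eq_rect a tm s c e else V y c
      | right _ => V y c
      end
  | K c => K c
  | Q c => Q c
  | A f u => A (subst x s f) (subst x s u)
  | L y c body =>
      if (Nat.eqb x y && (if ty_eq_dec a c then true else false))%bool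
      then L y c body else L y c (subst x s body)
  end.

(** Connectives defined from equality (Andrews' Q0 definitions). *)
Definition EQ {a} (r s : tm a) : tm TO := A (A (Q a) r) s.
Definition TT : tm TO := EQ (Q TO) (Q TO).
Definition FF : tm TO := EQ (L 0 TO TT) (L 0 TO (V 0 TO)).
Definition NOT (p : tm TO) : tm TO := EQ FF p.
Definition NEQ {a} (r s : tm a) : tm TO := NOT (EQ r s).
(* and := λx λy. (λg. g T T) = (λg. g x y) *)
Definition ANDc : tm (Arr TO (Arr TO TO)) :=
  let G := Arr TO (Arr TO TO) in
  L 0 TO (L 1 TO (EQ (L 2 G (A (A (V 2 G) TT) TT))
                     (L 2 G (A (A (V 2 G) (V 0 TO)) (V 1 TO))))).
Definition AND (p q : tm TO) : tm TO := A (A ANDc p) q.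
Definition OR (p q : tm TO) : tm TO := NOT (AND (NOT p) (NOT q)).
Definition FORALL (x : nat) (a : ty) (p : tm TO) : tm TO := EQ (L x a p) (L x a TT).
Definition EXISTS (x : nat) (a : ty) (p : tm TO) : tm TO := NEQ (L x a p) (L x a FF).
Definition bigAnd (l : list (tm TO)) : tm TO := fold_right AND TT l.
Definition bigOr (l : list (tm TO)) : tm TO := fold_right OR FF l.

Record model : Type := {
  D : ty -> Type;
  app : forall a b, D (Arr a b) -> D a -> D b;
  app_ext : forall a b (f g : D (Arr a b)), (forall d, app f d = app g d) -> f = g;
  tv : D TO -> bool;                         (* D_o = {T, F} *)
  tv_inj : forall p q, tv p = tv q -> p = q;
  tv_surj : forall v, exists p, tv p = v;
  inh : forall a, D a;
  I : forall c, D (cty c);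
  den : (forall (n : nat) (a : ty), D a) -> forall a, tm a -> D a;
  den_V : forall g n a, den g (V n a) = g n a;
  den_K : forall g c, den g (K c) = I c;
  den_Q : forall g a (d e : D a),
      tv (app (app (den g (Q a)) d) e) = true <-> d = e;
  den_A : forall g a b (f : tm (Arr a b)) (u : tm a),
      den g (A f u) = app (den g f) (den g u);
  den_L : forall g n a b (t : tm b) (d : D a),
      app (den g (L n a t)) d =
      den (fun m c => match ty_eq_dec a c with
                      | left e => if Nat.eqb n m then eq_rect a D d c e else g m c
                      | right _ => g m c
                      end) t
}.

Definition true_in (M : model) (p : tm TO) : Prop :=
  forall g, tv M (den M g p) = true.

Definition valid (p : tm TO) : Prop := forall M : model, true_in M p.

(** Probability on sentences (mu is only ever used on closed formulas). *)
Definition probability (mu : tm TO -> R) : Prop :=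
  (forall p, closed p -> 0 <= mu p) /\
  (forall p, closed p -> valid p -> mu p = 1) /\
  (forall p q, closed p -> closed q -> valid (NOT (AND p q)) ->
               mu (OR p q) = mu p + mu q).

End Syntax.

Arguments V {C cty} n a.
Arguments K {C cty} c.
Arguments Q {C cty} a.
Arguments A {C cty a b} _ _.
Arguments L {C cty} n a {b} _.

Definition is_sup (E : R -> Prop) (x : R) : Prop := is_lub E x.
Definition is_inf (E : R -> Prop) (x : R) : Prop :=
  (forall y, E y -> x <= y) /\ (forall z, (forall y, E y -> z <= y) -> z <= x).

Section Conditions.
Context {C : Type} (cty : C -> ty) (mu : tm cty TO -> R).

Definition closed_list {a} (l : list (tm cty a)) : Prop := Forall (fun t => closed t) l.

Definition gaifman : Prop :=
  forall a b (r s : tm cty (Arr a b)), closed r -> closed s ->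
    is_inf (fun y => exists l : list (tm cty a), closed_list l /\
              y = mu (bigAnd (map (fun t => EQ (A r t) (A s t)) l)))
           (mu (EQ r s)).

Definition cond_neq_sup : Prop :=
  forall a b (r s : tm cty (Arr a b)), closed r -> closed s ->
    is_sup (fun y => exists l : list (tm cty a), closed_list l /\
              y = mu (bigOr (map (fun t => NEQ (A r t) (A s t)) l)))
           (mu (NEQ r s)).

Definition single_free (x : nat) (a : ty) (phi : tm cty TO) : Prop :=
  forall v, In v (fvs phi) <-> v = (x, a).

Definition cond_exists_sup : Prop :=
  forall (x : nat) (a : ty) (phi : tm cty TO), single_free x a phi ->
    is_sup (fun y => exists l : list (tm cty a), closed_list l /\
              y = mu (bigOr (map (fun t => subst x t phi) l)))
           (mu (EXISTS x a phi)).

Definition cond_forall_inf : Prop :=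
  forall (x : nat) (a : ty) (phi : tm cty TO), single_free x a phi ->
    is_inf (fun y => exists l : list (tm cty a), closed_list l /\
              y = mu (bigAnd (map (fun t => subst x t phi) l)))
           (mu (FORALL x a phi)).
End Conditions.

(* Main.v *)
Require Import Defs.
From Stdlib Require Import Reals List Bool Arith Lra Eqdep_dec.
Import ListNotations.
Open Scope R_scope.

Section Sem.
Context {C : Type} (cty : C -> ty) (M : model cty).

Definition env := nat -> forall a : ty, D M a.

Definition upd (g : env) (n : nat) (a : ty) (d : D M a) : env :=
  fun m c => match ty_eq_dec a c with
             | left e => if Nat.eqb n m then eq_rect a (D M) d c e else g m c
             | right _ => g m c
             end.

Lemma denL g n a b (t : tm cty b) d :
  Defs.app M a b (den M g (L n a t)) d = den M (upd g n a d) t.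
Proof. exact (den_L M g n a t d). Qed.

Lemma upd_same g n a d : upd g n a d n a = d.
Proof.
  unfold upd. destruct (ty_eq_dec a a) as [e|e]; [|congruence].
  rewrite Nat.eqb_refl. rewrite (UIP_dec ty_eq_dec e eq_refl). reflexivity.
Qed.

Lemma upd_other g n a d m c : (n, a) <> (m, c) -> upd g n a d m c = g m c.
Proof.
  intro H. unfold upd. destruct (ty_eq_dec a c) as [e|e]; [|reflexivity].
  subst c. destruct (Nat.eqb n m) eqn:E; [|reflexivity].
  apply Nat.eqb_eq in E. subst. congruence.
Qed.

Lemma upd_cases g n a d m c :
  ((n, a) = (m, c) /\ (forall P : forall c, D M c -> Prop, P a d -> P c (upd g n a d m c)))
  \/ ((n, a) <> (m, c) /\ upd g n a d m c = g m c).
Proof.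
  destruct (var_eq_dec (n, a) (m, c)) as [e|e].
  - left. split; auto. inversion e; subst. rewrite upd_same. auto.
  - right. split; auto. apply upd_other; auto.
Qed.

Lemma tv_eq (x y : D M TO) : tv M x = tv M y -> x = y.
Proof. apply tv_inj. Qed.

Lemma denQ_indep g g' a : den M g (Q a) = den M g' (Q a).
Proof.
  apply app_ext; intro d. apply app_ext; intro e. apply tv_inj.
  destruct (tv M (Defs.app M _ _ (Defs.app M _ _ (den M g (Q a)) d) e)) eqn:E1;
  destruct (tv M (Defs.app M _ _ (Defs.app M _ _ (den M g' (Q a)) d) e)) eqn:E2; auto.
  - apply (den_Q M g a d e) in E1. subst. rewrite <- E2. symmetry. apply (den_Q M g' a e e). auto.
  - apply (den_Q M g' a d e) in E2. subst. rewrite <- E1. apply (den_Q M g a e e). auto.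
Qed.

Lemma den_indep b (t : tm cty b) : forall g g',
  (forall n a, In (n, a) (fvs t) -> g n a = g' n a) -> den M g t = den M g' t.
Proof.
  induction t; intros g g' H; simpl in H.
  - rewrite !den_V. apply H. auto.
  - rewrite !den_K. auto.
  - apply denQ_indep.
  - rewrite !den_A. f_equal; [apply IHt1|apply IHt2]; intros; apply H; apply in_or_app; auto.
  - apply app_ext; intro d. rewrite !denL. apply IHt. intros m c Hm.
    destruct (var_eq_dec (n, a) (m, c)) as [e|e].
    + inversion e; subst. rewrite !upd_same. auto.
    + rewrite !upd_other by auto. apply H. apply filter_In. split; auto.
      destruct (var_eq_dec (m, c) (n, a)); congruence.
Qed.

Lemma den_closed b (t : tm cty b) g g' : closed t -> den M g t = den M g' t.
Proof. intro H. apply den_indep. unfold closed in H. rewrite H. simpl. tauto. Qed.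

Lemma den_ext b (t : tm cty b) g g' : (forall n a, g n a = g' n a) -> den M g t = den M g' t.
Proof. intros H. apply den_indep. auto. Qed.

Lemma upd_comm g x a v y c d : (x, a) <> (y, c) -> forall m e,
  upd (upd g y c d) x a v m e = upd (upd g x a v) y c d m e.
Proof.
  intros Hne m e.
  destruct (var_eq_dec (x, a) (m, e)) as [E|E].
  - inversion E; subst. rewrite upd_same. rewrite upd_other by auto. rewrite upd_same. auto.
  - rewrite (upd_other _ x a) by auto.
    destruct (var_eq_dec (y, c) (m, e)) as [E'|E'].
    + inversion E'; subst. rewrite !upd_same. auto.
    + rewrite !upd_other by auto. auto.
Qed.

Lemma subst_den b (t : tm cty b) : forall g x a (s : tm cty a), closed s ->
  den M g (subst x s t) = den M (upd g x a (den M g s)) t.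
Proof.
  induction t; intros g x a0 s Hs; simpl.
  - rewrite den_V.
    destruct (var_eq_dec (x, a0) (n, a)) as [E|E].
    + inversion E; subst. rewrite upd_same.
      destruct (ty_eq_dec a a) as [e|e]; [|congruence].
      rewrite (UIP_dec ty_eq_dec e eq_refl). rewrite Nat.eqb_refl. reflexivity.
    + rewrite upd_other by auto.
      destruct (ty_eq_dec a0 a) as [e|e].
      * subst a. destruct (Nat.eqb x n) eqn:En.
        -- apply Nat.eqb_eq in En. subst. congruence.
        -- rewrite den_V. auto.
      * rewrite den_V. auto.
  - rewrite !den_K. auto.
  - apply denQ_indep.
  - rewrite !den_A. rewrite IHt1, IHt2 by auto. auto.
  - destruct (Nat.eqb x n && (if ty_eq_dec a0 a then true else false))%bool eqn:Ec.
    + apply andb_true_iff in Ec. destruct Ec as [E1 E2]. apply Nat.eqb_eq in E1.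
      destruct (ty_eq_dec a0 a); [|discriminate]. subst.
      apply den_indep. intros m c Hm. simpl in Hm. apply filter_In in Hm. destruct Hm as [_ Hm].
      rewrite upd_other; auto. intro E. inversion E; subst.
      destruct (var_eq_dec (m, c) (m, c)); congruence.
    + assert (Hne : (x, a0) <> (n, a)).
      { intro E. inversion E; subst. rewrite Nat.eqb_refl in Ec.
        destruct (ty_eq_dec a a); simpl in Ec; congruence. }
      apply app_ext; intro d. rewrite !denL. rewrite IHt by auto.
      rewrite (den_closed _ s (upd g n a d) g) by auto.
      apply den_ext. intros. apply upd_comm. auto.
Qed.


Local Open Scope nat_scope.
Notation tvd g p := (tv M (den M g p)).

Lemma sem_EQ g a (r s : tm cty a) : tvd g (EQ r s) = true <-> den M g r = den M g s.
Proof. unfold EQ. rewrite !den_A. apply den_Q. Qed.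

Lemma sem_TT g : tvd g (TT cty) = true.
Proof. unfold TT. apply sem_EQ. auto. Qed.

Lemma sem_FF g : tvd g (FF cty) = false.
Proof.
  destruct (tvd g (FF cty)) eqn:E; auto. unfold FF in E. apply sem_EQ in E.
  destruct (tv_surj M false) as [d Hd].
  apply (f_equal (fun f => Defs.app M _ _ f d)) in E. rewrite !denL in E.
  rewrite den_V, upd_same in E. rewrite <- E in Hd. rewrite sem_TT in Hd. discriminate.
Qed.

Lemma sem_NOT g p : tvd g (NOT p) = negb (tvd g p).
Proof.
  unfold NOT. destruct (tvd g p) eqn:E; simpl.
  - destruct (tvd g (EQ (FF cty) p)) eqn:E2; auto. apply sem_EQ in E2.
    rewrite <- E2, sem_FF in E. discriminate.
  - apply sem_EQ. apply tv_inj. rewrite sem_FF, E. auto.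
Qed.

Lemma proj1_den g (x y : D M TO) :
  Defs.app M _ _ (Defs.app M _ _ (den M g (L 3 TO (L 4 TO (V 3 TO)))) x) y = x.
Proof. rewrite !denL, den_V. rewrite upd_other by congruence. apply upd_same. Qed.

Lemma proj2_den g (x y : D M TO) :
  Defs.app M _ _ (Defs.app M _ _ (den M g (L 3 TO (L 4 TO (V 4 TO)))) x) y = y.
Proof. rewrite !denL, den_V. apply upd_same. Qed.

Lemma sem_AND g p q : tvd g (AND p q) = (tvd g p && tvd g q)%bool.
Proof.
  unfold AND. rewrite !den_A. unfold ANDc. cbv zeta. rewrite !denL.
  set (dp := den M g p). set (dq := den M g q).
  set (g2 := upd (upd g 0 TO dp) 1 TO dq).
  set (G := Arr TO (Arr TO TO)).
  assert (H0 : forall h, upd g2 2 G h 0 TO = dp).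
  { intro h. rewrite upd_other by congruence. unfold g2. rewrite upd_other by congruence. apply upd_same. }
  assert (H1 : forall h, upd g2 2 G h 1 TO = dq).
  { intro h. rewrite upd_other by congruence. unfold g2. apply upd_same. }
  destruct (tv M dp && tv M dq)%bool eqn:Eb.
  - apply andb_true_iff in Eb. destruct Eb as [Ep Eq].
    apply sem_EQ. apply app_ext. intro h. rewrite !denL. rewrite !den_A, !den_V, upd_same, H0, H1.
    f_equal; [f_equal|]; apply tv_inj; rewrite sem_TT; auto.
  - destruct (tvd g2 (EQ _ _)) eqn:E; auto. exfalso. apply sem_EQ in E.
    apply andb_false_iff in Eb. destruct Eb as [Ep|Eq].
    + apply (f_equal (fun f => Defs.app M _ _ f (den M g (L 3 TO (L 4 TO (V 3 TO)))))) in E.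
      rewrite !denL in E. rewrite !den_A, !den_V, !upd_same, H0, H1 in E.
      rewrite !proj1_den in E. fold dp in Ep. rewrite <- E, sem_TT in Ep. discriminate.
    + apply (f_equal (fun f => Defs.app M _ _ f (den M g (L 3 TO (L 4 TO (V 4 TO)))))) in E.
      rewrite !denL in E. rewrite !den_A, !den_V, !upd_same, H0, H1 in E.
      rewrite !proj2_den in E. fold dq in Eq. rewrite <- E, sem_TT in Eq. discriminate.
Qed.

Lemma sem_OR g p q : tvd g (OR p q) = (tvd g p || tvd g q)%bool.
Proof. unfold OR. rewrite sem_NOT, sem_AND, !sem_NOT. destruct (tvd g p), (tvd g q); auto. Qed.

End Sem.

Section Syn.
Context {C : Type} {cty : C -> ty}.

Lemma fvs_A a b (f : tm cty (Arr a b)) (u : tm cty a) : fvs (A f u) = fvs f ++ fvs u.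
Proof. reflexivity. Qed.
Lemma fvs_FF : fvs (FF cty) = []. Proof. reflexivity. Qed.

Lemma closed_A a b (f : tm cty (Arr a b)) (u : tm cty a) : closed f -> closed u -> closed (A f u).
Proof. unfold closed. rewrite fvs_A. intros -> ->. reflexivity. Qed.
Lemma closed_EQ a (r s : tm cty a) : closed r -> closed s -> closed (EQ r s).
Proof. intros. unfold EQ. repeat apply closed_A; auto; try reflexivity. Qed.
Lemma closed_NOT p : closed p -> closed (NOT (cty:=cty) p).
Proof. intros. apply closed_EQ; auto; try reflexivity. Qed.
Lemma closed_AND p q : closed p -> closed q -> closed (AND (cty:=cty) p q).
Proof. intros. unfold AND. repeat apply closed_A; auto; try reflexivity. Qed.
Lemma closed_OR p q : closed p -> closed q -> closed (OR (cty:=cty) p q).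
Proof. intros. unfold OR. apply closed_NOT, closed_AND; apply closed_NOT; auto. Qed.
Lemma closed_bigAnd l : Forall (fun p => closed p) l -> closed (bigAnd (cty:=cty) l).
Proof. induction 1; simpl. reflexivity. apply closed_AND; auto. Qed.
Lemma closed_bigOr l : Forall (fun p => closed p) l -> closed (bigOr (cty:=cty) l).
Proof. induction 1; simpl. reflexivity. apply closed_OR; auto. Qed.

Lemma closed_L x a b (phi : tm cty b) : (forall v, In v (fvs phi) -> v = (x, a)) -> closed (L x a phi).
Proof.
  intro H. unfold closed. simpl. induction (fvs phi) as [|w l IH]; simpl; auto.
  rewrite (H w (or_introl eq_refl)). destruct (var_eq_dec (x, a) (x, a)); [|congruence].
  apply IH. intros; apply H; simpl; auto.
Qed.

Lemma fvs_subst b (t : tm cty b) : forall x a (s : tm cty a) v, closed s ->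
  In v (fvs (subst x s t)) -> In v (fvs t) /\ v <> (x, a).
Proof.
  induction t; intros x a0 s v Hs Hv; simpl in *.
  - destruct (ty_eq_dec a0 a) as [e|e].
    + subst a. destruct (Nat.eqb x n) eqn:En.
      * simpl in Hv. unfold closed in Hs. rewrite Hs in Hv. destruct Hv.
      * simpl in Hv. destruct Hv as [Hv|[]]. subst. split; auto.
        intro E; inversion E; subst. rewrite Nat.eqb_refl in En. discriminate.
    + simpl in Hv. destruct Hv as [Hv|[]]. subst. split; auto. intro E; inversion E; congruence.
  - destruct Hv.
  - destruct Hv.
  - rewrite in_app_iff in *. destruct Hv as [Hv|Hv].
    + destruct (IHt1 x a0 s v Hs Hv). auto.
    + destruct (IHt2 x a0 s v Hs Hv). auto.
  - destruct (Nat.eqb x n && (if ty_eq_dec a0 a then true else false))%bool eqn:Ec.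
    + apply andb_true_iff in Ec. destruct Ec as [E1 E2]. apply Nat.eqb_eq in E1.
      destruct (ty_eq_dec a0 a); [|discriminate]. subst. simpl in Hv. split; auto.
      apply filter_In in Hv. destruct Hv as [_ Hv]. intro E; subst.
      destruct (var_eq_dec (n, a) (n, a)); congruence.
    + simpl in Hv. apply filter_In in Hv. destruct Hv as [Hv1 Hv2].
      destruct (IHt x a0 s v Hs Hv1) as [H1 H2]. split; auto. apply filter_In. auto.
Qed.

Lemma closed_subst x a (phi : tm cty TO) (t : tm cty a) :
  single_free x a phi -> closed t -> closed (subst x t phi).
Proof.
  intros Hp Ht. unfold closed. destruct (fvs (subst x t phi)) as [|v l] eqn:E; auto.
  exfalso. destruct (@fvs_subst _ phi x _ t v Ht) as [H1 H2]. rewrite E; simpl; auto.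
  apply H2. apply Hp. auto.
Qed.

Lemma single_free_NOT x a phi : single_free x a phi -> single_free x a (NOT (cty:=cty) phi).
Proof.
  unfold single_free. intros H v. unfold NOT, EQ. rewrite !fvs_A, fvs_FF. simpl. apply H.
Qed.

End Syn.

Arguments closed_NOT {C cty p}.
Arguments closed_OR {C cty p q}.
Arguments closed_AND {C cty p q}.

Definition equiv {C : Type} {cty : C -> ty} (p q : tm cty TO) : Prop :=
  forall (M : model cty) g, tv M (den M g p) = tv M (den M g q).

Section Prob.
Context {C : Type} (cty : C -> ty) (mu : tm cty TO -> R) (Hmu : probability mu).

Lemma mu_NOT p : closed p -> mu (NOT p) = 1 - mu p.
Proof.
  intro Hp. destruct Hmu as [H0 [H1 H2]].
  assert (E1 := H2 p (NOT p) Hp (closed_NOT Hp)).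
  assert (E2 := H1 (OR p (NOT p)) (closed_OR Hp (closed_NOT Hp))).
  assert (V1 : valid (NOT (AND p (NOT p)))).
  { intros M g. rewrite sem_NOT, sem_AND, sem_NOT. destruct (tv M (den M g p)); auto. }
  assert (V2 : valid (OR p (NOT p))).
  { intros M g. rewrite sem_OR, sem_NOT. destruct (tv M (den M g p)); auto. }
  specialize (E1 V1). specialize (E2 V2). lra.
Qed.

Lemma mu_equiv p q : closed p -> closed q -> equiv p q -> mu p = mu q.
Proof.
  intros Hp Hq He. destruct Hmu as [H0 [H1 H2]].
  assert (E1 := H2 p (NOT q) Hp (closed_NOT Hq)).
  assert (E2 := H1 (OR p (NOT q)) (closed_OR Hp (closed_NOT Hq))).
  assert (V1 : valid (NOT (AND p (NOT q)))).
  { intros M g. rewrite sem_NOT, sem_AND, sem_NOT, He. destruct (tv M (den M g q)); auto. }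
  assert (V2 : valid (OR p (NOT q))).
  { intros M g. rewrite sem_OR, sem_NOT, He. destruct (tv M (den M g q)); auto. }
  specialize (E1 V1). specialize (E2 V2). rewrite mu_NOT in E1 by auto. lra.
Qed.

End Prob.

Lemma tv_bigOr_not {C : Type} {cty : C -> ty} (X : Type) (l : list X) (f h : X -> tm cty TO) :
  (forall x, In x l -> forall M g, tv M (den M g (f x)) = negb (tv M (den M g (h x)))) ->
  forall M g, tv M (den M g (bigOr (map f l))) = negb (tv M (den M g (bigAnd (map h l)))).
Proof.
  induction l as [|x l IH]; intros H M g; simpl.
  - rewrite sem_FF, sem_TT. auto.
  - rewrite sem_OR, sem_AND, H, IH.
    + destruct (tv M (den M g (h x))); auto.
    + intros; apply H; simpl; auto.
    + simpl; auto.
Qed.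

Lemma tv_bigOr_eq {C : Type} {cty : C -> ty} (X : Type) (l : list X) (f h : X -> tm cty TO) :
  (forall x, In x l -> forall M g, tv M (den M g (f x)) = tv M (den M g (h x))) ->
  forall M g, tv M (den M g (bigOr (map f l))) = tv M (den M g (bigOr (map h l))).
Proof.
  induction l as [|x l IH]; intros H M g; simpl; auto.
  rewrite !sem_OR, H, IH; auto.
  - intros; apply H; simpl; auto.
  - simpl; auto.
Qed.

Lemma dual_sets (E1 E2 : R -> Prop) x1 x2 :
  (forall y, E2 y <-> E1 (1 - y)) -> x2 = 1 - x1 -> (is_inf E1 x1 <-> is_sup E2 x2).
Proof.
  intros HE Hx. subst x2. unfold is_sup, is_lub, is_upper_bound, is_inf. split.
  - intros [Hl Hg]. split.
    + intros y Hy. apply HE in Hy. apply Hl in Hy. lra.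
    + intros b Hb. assert (1 - b <= x1); [|lra]. apply Hg. intros y Hy.
      assert (y <= 1 - (1 - y)) by lra. assert (1 - y <= b); [|lra]. apply Hb, HE.
      replace (1 - (1 - y)) with y by lra. auto.
  - intros [Hl Hg]. split.
    + intros y Hy. assert (1 - y <= 1 - x1); [|lra]. apply Hl, HE.
      replace (1 - (1 - y)) with y by lra. auto.
    + intros z Hz. assert (1 - x1 <= 1 - z); [|lra]. apply Hg. intros y Hy.
      apply HE in Hy. apply Hz in Hy. lra.
Qed.

Lemma dual_lists {X : Type} {T : Type} (mu : T -> R) (P : list X -> Prop) (F G : list X -> T) x1 x2 :
  (forall l, P l -> mu (G l) = 1 - mu (F l)) -> x2 = 1 - x1 ->
  (is_inf (fun y => exists l, P l /\ y = mu (F l)) x1 <->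
   is_sup (fun y => exists l, P l /\ y = mu (G l)) x2).
Proof.
  intros H Hx. apply dual_sets; auto. intro y. split.
  - intros [l [Pl ->]]. exists l. split; auto. rewrite H; auto. lra.
  - intros [l [Pl E]]. exists l. split; auto. rewrite H; auto. lra.
Qed.

Lemma ext_lists {X : Type} {T : Type} (mu : T -> R) (P : list X -> Prop) (F G : list X -> T) x1 x2 :
  (forall l, P l -> mu (F l) = mu (G l)) -> x1 = x2 ->
  is_sup (fun y => exists l, P l /\ y = mu (F l)) x1 ->
  is_sup (fun y => exists l, P l /\ y = mu (G l)) x2.
Proof.
  intros H <- [Hl Hg]. split.
  - intros y [l [Pl ->]]. apply Hl. exists l. rewrite H; auto.
  - intros b Hb. apply Hg. intros y [l [Pl ->]]. apply Hb. exists l. rewrite H; auto.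
Qed.

Section Main.
Context {C : Type} (cty : C -> ty) (mu : tm cty TO -> R) (Hmu : probability mu).

Lemma closed_list_map {a} (l : list (tm cty a)) (F : tm cty a -> tm cty TO) :
  closed_list l -> (forall t, closed t -> closed (F t)) -> Forall (fun p => closed p) (map F l).
Proof. intros Hl HF. apply Forall_map. eapply Forall_impl; [|exact Hl]. auto. Qed.

Lemma part1 : gaifman mu <-> cond_neq_sup mu.
Proof.
  assert (K : forall a b (r s : tm cty (Arr a b)), closed r -> closed s ->
    (is_inf (fun y => exists l : list (tm cty a), closed_list l /\
              y = mu (bigAnd (map (fun t => EQ (A r t) (A s t)) l))) (mu (EQ r s)) <->
     is_sup (fun y => exists l : list (tm cty a), closed_list l /\
              y = mu (bigOr (map (fun t => NEQ (A r t) (A s t)) l))) (mu (NEQ r s)))).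
  { intros a b r s Hr Hs.
    apply (dual_lists mu (@closed_list _ cty _)
      (fun l => bigAnd (map (fun t => EQ (A r t) (A s t)) l))
      (fun l => bigOr (map (fun t => NEQ (A r t) (A s t)) l))).
    - intros l Hl.
      assert (C1 : closed (bigAnd (map (fun t => EQ (A r t) (A s t)) l))).
      { apply closed_bigAnd, closed_list_map; auto. intros. apply closed_EQ; apply closed_A; auto. }
      rewrite <- (mu_NOT _ _ Hmu) by auto. apply (mu_equiv _ _ Hmu).
      + apply closed_bigOr, closed_list_map; auto. intros. apply closed_NOT, closed_EQ; apply closed_A; auto.
      + apply closed_NOT; auto.
      + intros M g. rewrite sem_NOT. apply tv_bigOr_not. intros. unfold NEQ. apply sem_NOT.
    - unfold NEQ. apply (mu_NOT _ _ Hmu). apply closed_EQ; auto. }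
  split; intros H a b r s Hr Hs; apply K; auto; apply H; auto.
Qed.

Lemma fv_closed_L x a (phi : tm cty TO) : single_free x a phi -> closed (L x a phi).
Proof. intro H. apply closed_L. intros v Hv. apply H; auto. Qed.

Lemma part2 : cond_neq_sup mu <-> cond_exists_sup mu.
Proof.
  split.
  - intros H x a phi Hphi.
    assert (Hr : closed (L x a phi)) by (apply fv_closed_L; auto).
    assert (Hs : closed (L x a (FF cty))) by reflexivity.
    specialize (H a TO _ _ Hr Hs).
    eapply (ext_lists mu (@closed_list _ cty _)); [|reflexivity|exact H].
    intros l Hl. apply (mu_equiv _ _ Hmu).
    + apply closed_bigOr, closed_list_map; auto. intros. apply closed_NOT, closed_EQ; apply closed_A; auto.
    + apply closed_bigOr, closed_list_map; auto. intros. apply closed_subst; auto.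
    + intros M g. apply tv_bigOr_eq. intros t Ht M' g'.
      assert (Htc : closed t) by (unfold closed_list in Hl; rewrite Forall_forall in Hl; auto).
      unfold NEQ. rewrite sem_NOT, subst_den by auto.
      destruct (tv M' (den M' (upd _ M' g' x a (den M' g' t)) phi)) eqn:E.
      * destruct (tv M' (den M' g' (EQ (A (L x a phi) t) (A (L x a (FF cty)) t)))) eqn:E2; auto.
        apply sem_EQ in E2. rewrite !den_A, !denL in E2. rewrite E2, sem_FF in E. discriminate.
      * assert (E2 : tv M' (den M' g' (EQ (A (L x a phi) t) (A (L x a (FF cty)) t))) = true).
        { apply sem_EQ. rewrite !den_A, !denL. apply tv_inj. rewrite E, sem_FF. auto. }
        rewrite E2. auto.
  - intros H a b r s Hr Hs.
    set (phi := NEQ (A r (V 0 a)) (A s (V 0 a))).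
    assert (Hsf : single_free 0 a phi).
    { unfold single_free, phi, NEQ, NOT, EQ. intro v. unfold closed in Hr, Hs.
      simpl. rewrite Hr, Hs. simpl. intuition. }
    specialize (H 0%nat a phi Hsf).
    eapply (ext_lists mu (@closed_list _ cty _)); [| |exact H].
    + intros l Hl. apply (mu_equiv _ _ Hmu).
      * apply closed_bigOr, closed_list_map; auto. intros. apply closed_subst; auto.
      * apply closed_bigOr, closed_list_map; auto. intros. apply closed_NOT, closed_EQ; apply closed_A; auto.
      * intros M g. apply tv_bigOr_eq. intros t Ht M' g'.
        assert (Htc : closed t) by (unfold closed_list in Hl; rewrite Forall_forall in Hl; auto).
        rewrite subst_den by auto. unfold phi, NEQ. rewrite !sem_NOT. f_equal.
        apply eq_iff_eq_true. rewrite !sem_EQ, !den_A, den_V, upd_same.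
        rewrite (den_closed _ _ _ r _ g'), (den_closed _ _ _ s _ g') by auto. tauto.
    + apply (mu_equiv _ _ Hmu).
      * apply closed_NOT, closed_EQ; [apply fv_closed_L; auto | reflexivity].
      * apply closed_NOT, closed_EQ; auto.
      * intros M g. unfold EXISTS, NEQ. rewrite !sem_NOT. f_equal.
        apply eq_iff_eq_true. rewrite !sem_EQ. split; intro E.
        -- apply app_ext. intro d. apply (f_equal (fun f => Defs.app M _ _ f d)) in E.
           rewrite !denL in E. apply (f_equal (tv M)) in E. rewrite sem_FF in E.
           unfold phi, NEQ in E. rewrite sem_NOT in E. apply negb_false_iff in E.
           apply sem_EQ in E. rewrite !den_A, den_V, upd_same in E.
           rewrite (den_closed _ _ _ r _ g), (den_closed _ _ _ s _ g) in E by auto. auto.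
        -- apply app_ext. intro d. rewrite !denL. apply tv_inj. rewrite sem_FF.
           unfold phi, NEQ. rewrite sem_NOT. apply negb_false_iff. apply sem_EQ.
           rewrite !den_A, den_V, upd_same.
           rewrite (den_closed _ _ _ r _ g), (den_closed _ _ _ s _ g) by auto. rewrite E. auto.
Qed.

Lemma ex_all x a (psi chi : tm cty TO) :
  (forall M g, tv M (den M g chi) = negb (tv M (den M g psi))) ->
  equiv (EXISTS x a psi) (NOT (FORALL x a chi)).
Proof.
  intros Hc M g. unfold EXISTS, NEQ, FORALL. rewrite !sem_NOT. f_equal.
  apply eq_iff_eq_true. rewrite !sem_EQ. split; intro E; apply app_ext; intro d;
  apply (f_equal (fun f => Defs.app M _ _ f d)) in E; rewrite !denL in *;
  apply (f_equal (tv M)) in E; apply tv_inj.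
  - rewrite Hc, sem_TT, E, sem_FF. auto.
  - rewrite Hc, sem_TT in E. rewrite sem_FF. destruct (tv M _); auto.
Qed.

Lemma closed_FORALL x a phi : single_free x a phi -> closed (FORALL (cty:=cty) x a phi).
Proof. intros. apply closed_EQ; [apply fv_closed_L; auto | reflexivity]. Qed.
Lemma closed_EXISTS x a phi : single_free x a phi -> closed (EXISTS (cty:=cty) x a phi).
Proof. intros. apply closed_NOT, closed_EQ; [apply fv_closed_L; auto | reflexivity]. Qed.

Lemma part3 : cond_exists_sup mu <-> cond_forall_inf mu.
Proof.
  split.
  - intros H x a phi Hphi.
    specialize (H x a (NOT phi) (single_free_NOT _ _ _ Hphi)).
    refine (proj2 (dual_lists mu (@closed_list _ cty _)
      (fun l => bigAnd (map (fun t => subst x t phi) l))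
      (fun l => bigOr (map (fun t => subst x t (NOT phi)) l)) _ _ _ _) H).
    + intros l Hl.
      assert (C1 : closed (bigAnd (map (fun t => subst x t phi) l))).
      { apply closed_bigAnd, closed_list_map; auto. intros. apply closed_subst; auto. }
      rewrite <- (mu_NOT _ _ Hmu) by auto. apply (mu_equiv _ _ Hmu).
      * apply closed_bigOr, closed_list_map; auto. intros. apply closed_subst; auto; apply single_free_NOT; auto.
      * apply closed_NOT; auto.
      * intros M g. rewrite sem_NOT. apply tv_bigOr_not. intros t Ht M' g'.
        assert (Htc : closed t) by (unfold closed_list in Hl; rewrite Forall_forall in Hl; auto).
        rewrite !subst_den, sem_NOT by auto. auto.
    + rewrite <- (mu_NOT _ _ Hmu) by (apply closed_FORALL; auto). apply (mu_equiv _ _ Hmu).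
      * apply closed_EXISTS, single_free_NOT; auto.
      * apply closed_NOT, closed_FORALL; auto.
      * apply ex_all. intros. rewrite sem_NOT, negb_involutive. auto.
  - intros H x a phi Hphi.
    specialize (H x a (NOT phi) (single_free_NOT _ _ _ Hphi)).
    refine (proj1 (dual_lists mu (@closed_list _ cty _)
      (fun l => bigAnd (map (fun t => subst x t (NOT phi)) l))
      (fun l => bigOr (map (fun t => subst x t phi) l)) _ _ _ _) H).
    + intros l Hl.
      assert (C1 : closed (bigAnd (map (fun t => subst x t (NOT phi)) l))).
      { apply closed_bigAnd, closed_list_map; auto. intros. apply closed_subst; auto; apply single_free_NOT; auto. }
      rewrite <- (mu_NOT _ _ Hmu) by auto. apply (mu_equiv _ _ Hmu).
      * apply closed_bigOr, closed_list_map; auto. intros. apply closed_subst; auto.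
      * apply closed_NOT; auto.
      * intros M g. rewrite sem_NOT. apply tv_bigOr_not. intros t Ht M' g'.
        assert (Htc : closed t) by (unfold closed_list in Hl; rewrite Forall_forall in Hl; auto).
        rewrite !subst_den, sem_NOT, negb_involutive by auto. auto.
    + rewrite <- (mu_NOT _ _ Hmu) by (apply closed_FORALL, single_free_NOT; auto). apply (mu_equiv _ _ Hmu).
      * apply closed_EXISTS; auto.
      * apply closed_NOT, closed_FORALL, single_free_NOT; auto.
      * apply ex_all. intros. rewrite sem_NOT. auto.
Qed.

End Main.

Theorem mainTheorem6 (C : Type) (cty : C -> ty) (mu : tm cty TO -> R)
  (Hmu : probability mu) :
  (gaifman mu <-> cond_neq_sup mu) /\
  (cond_neq_sup mu <-> cond_exists_sup mu) /\
  (cond_exists_sup mu <-> cond_forall_inf mu).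
Proof.
  split; [apply part1 | split; [apply part2 | apply part3]]; auto.
Qed.
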